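(* Let $\mu$ be a differentiable growth rate and $\gamma_1,\gamma_2\in\rho^{ND}_\mu(A)$ with $\gamma_1<\gamma_2$. The following are equivalent: (a) $\mathcal U_{\gamma_2}\cap\mathcal V_{\gamma_1}\ne\mathbb R\times\{0\}$; (b) $[\gamma_1,\gamma_2]\cap\Sigma^{ND}_\mu(A)\ne\emptyset$; (c) $\operatorname{rank}\mathcal U_{\gamma_1}<\operatorname{rank}\mathcal U_{\gamma_2}$; (d) $\operatorname{rank}\mathcal V_{\gamma_1}>\operatorname{rank}\mathcal V_{\gamma_2}$.
   Context: Fix $n\ge1$ and a norm on $\mathbb R^n$. Let $A:\mathbb R\to M_n(\mathbb R)$ be continuous with evolution operator $\Phi(t,s)$. $\operatorname{sign}(s)\in\{-1,0,1\}$. A growth rate is a strictly increasing $\mu:\mathbb R\to(0,\infty)$, $\mu(0)=1$, $\mu\to+\infty$ at $+\infty$, $\mu\to0$ at $-\infty$; differentiable if it is differentiable. A linear system $x'=C(t)x$ with evolution operator $\Psi$ admits a nonuniform $\mu$-dichotomy (N$\mu$D) if there are projections $P(t)$ with $P(t)\Psi(t,s)=\Psi(t,s)P(s)$ and constants $K\ge1$, $\alpha<0$, $\beta>0$, $\theta,\nu\ge0$, $\alpha+\theta<0$, $\beta-\nu>0$ with ($Q=I-P$) $\|\Psi(t,s)P(s)\|\le K(\mu(t)/\mu(s))^{\alpha}\mu(s)^{\operatorname{sign}(s)\theta}$ for $t\ge s$ and $\|\Psi(t,s)Q(s)\|\le K(\mu(t)/\mu(s))^{\beta}\mu(s)^{\operatorname{sign}(s)\nu}$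 for $t\le s$. $\Sigma^{ND}_\mu(A)=\{\gamma: x'=(A(t)-\gamma\frac{\mu'(t)}{\mu(t)}I)x\text{ admits no N}\mu\text{D}\}$, $\rho^{ND}_\mu(A)=\mathbb R\setminus\Sigma^{ND}_\mu(A)$. $\mathcal U_\gamma=\{(s,\xi):\sup_{t\ge0}\|\Phi(t,s)\xi\|\mu(t)^{-\gamma}<\infty\}$, $\mathcal V_\gamma=\{(s,\xi):\sup_{t\le0}\|\Phi(t,s)\xi\|\mu(t)^{-\gamma}<\infty\}$. These are linear integral manifolds: their fibers $\mathcal W(s)=\{\xi:(s,\xi)\in\mathcal W\}$ are linear subspaces of $\mathbb R^n$ of a dimension independent of $s$, called the rank. Intersection is fiberwise. *)

(* Defs.v *)
From HB Require Import structures.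
From mathcomp Require Import all_boot all_order all_algebra.
From mathcomp Require Import all_classical all_reals all_analysis.
Set Implicit Arguments. Unset Strict Implicit. Unset Printing Implicit Defensive.
Import Order.TTheory GRing.Theory Num.Theory.
Import numFieldNormedType.Exports.
Local Open Scope classical_set_scope.
Local Open Scope ring_scope.

Section Defs.
Variable R : realType.

Definition is_norm (n : nat) (N : 'cV[R]_n -> R) : Prop :=
  [/\ forall x, 0 <= N x,
      forall x, N x = 0 -> x = 0,
      forall (a : R) x, N (a *: x) = `|a| * N x &
      forall x y, N (x + y) <= N x + N y].

Definition growth_rate (mu : R -> R) : Prop :=
  [/\ {homo mu : x y / x < y},
      forall t, 0 < mu t,
      mu 0 = 1,
      mu x @[x --> +oo] --> +oo &
      mu x @[x --> -oo] --> (0 : R)].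

Definition differentiable_growth_rate (mu : R -> R) : Prop :=
  growth_rate mu /\ forall t : R, derivable mu t (1 : R).

Definition is_evol_op (n : nat) (C : R -> 'M[R]_n) (Psi : R -> R -> 'M[R]_n) : Prop :=
  (forall s, Psi s s = 1%:M) /\
  (forall (t s : R), is_derive t (1 : R) (fun u : R => Psi u s) (C t *m Psi t s)).

Definition sgnR (s : R) : R := Num.sg s.

(* Nonuniform mu-dichotomy for an evolution operator Psi, w.r.t. the norm N
   (operator-norm bounds written out on vectors). *)
Definition NmuD (n : nat) (N : 'cV[R]_n -> R) (mu : R -> R)
    (Psi : R -> R -> 'M[R]_n) : Prop :=
  exists (P : R -> 'M[R]_n) (K alpha beta theta nu : R),
    [/\ (forall t, P t *m P t = P t),
        (forall t s, P t *m Psi t s = Psi t s *m P s),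
        [/\ 1 <= K, alpha < 0, 0 < beta, 0 <= theta & 0 <= nu] /\
          (alpha + theta < 0 /\ 0 < beta - nu),
        (forall t s xi, s <= t ->
           N (Psi t s *m P s *m xi)
             <= K * (mu t / mu s) `^ alpha * mu s `^ (sgnR s * theta) * N xi) &
        (forall t s xi, t <= s ->
           N (Psi t s *m (1%:M - P s) *m xi)
             <= K * (mu t / mu s) `^ beta * mu s `^ (sgnR s * nu) * N xi)].

Definition admits_NmuD (n : nat) (N : 'cV[R]_n -> R) (mu : R -> R)
    (C : R -> 'M[R]_n) : Prop :=
  exists Psi, is_evol_op C Psi /\ NmuD N mu Psi.

Definition SigmaND (n : nat) (N : 'cV[R]_n -> R) (mu : R -> R)
    (A : R -> 'M[R]_n) : set R :=
  [set gamma | ~ admits_NmuD N mu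
      (fun t => A t - (gamma * (derive1 mu t / mu t))%:M)].

Definition rhoND (n : nat) (N : 'cV[R]_n -> R) (mu : R -> R)
    (A : R -> 'M[R]_n) : set R := ~` SigmaND N mu A.

Definition Uman (n : nat) (N : 'cV[R]_n -> R) (mu : R -> R)
    (Phi : R -> R -> 'M[R]_n) (gamma : R) : set (R * 'cV[R]_n) :=
  [set p | exists M : R, forall t, 0 <= t ->
      N (Phi t p.1 *m p.2) * mu t `^ (- gamma) <= M].

Definition Vman (n : nat) (N : 'cV[R]_n -> R) (mu : R -> R)
    (Phi : R -> R -> 'M[R]_n) (gamma : R) : set (R * 'cV[R]_n) :=
  [set p | exists M : R, forall t, t <= 0 ->
      N (Phi t p.1 *m p.2) * mu t `^ (- gamma) <= M].

Definition fiber (n : nat) (W : set (R * 'cV[R]_n)) (s : R) : set 'cV[R]_n :=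
  [set xi | W (s, xi)].

Definition setdim (n : nat) (S : set 'cV[R]_n) : nat :=
  \max_(k < n.+1 | `[< exists M : 'M[R]_(n, k),
                       (forall j, S (col j M)) /\ \rank M = k >]) (k : nat).

(* Rank of a linear integral manifold: dimension of its fibers
   (independent of s; we use the fiber at s = 0). *)
Definition mrank (n : nat) (W : set (R * 'cV[R]_n)) : nat :=
  setdim (fiber W 0).

End Defs.

(* Main.v *)
Require Import Defs.
From HB Require Import structures.
From mathcomp Require Import all_boot all_order all_algebra.
From mathcomp Require Import all_classical all_reals all_analysis.
From mathcomp Require Import ring lra zify.
Import Order.TTheory GRing.Theory Num.Theory.
Import numFieldNormedType.Exports.
Local Open Scope classical_set_scope.
Local Open Scope ring_scope.
Set Implicit Arguments. Unset Strict Implicit. Unset Printing Implicit Defensive.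


Section P1.
Variable R : realType.

Lemma is_derive_compR (f g : R -> R) (x df dg : R) :
  is_derive x 1 f df -> is_derive (f x) 1 g dg -> is_derive x 1 (g \o f) (dg * df).
Proof.
move=> hf hg.
have df1 : derivable f x 1 by case: hf.
have dg1 : derivable g (f x) 1 by case: hg.
apply: DeriveDef.
  apply/derivable1_diffP; apply: differentiable_comp; exact/derivable1_diffP.
rewrite -derive1E derive1_comp // !derive1E.
by rewrite (@derive_val _ _ _ _ _ _ _ hf) (@derive_val _ _ _ _ _ _ _ hg) mulrC.
Qed.

Lemma is_derive_mxP m n (F : R -> 'M[R]_(m,n)) (t : R) (D : 'M[R]_(m,n)) :
  is_derive t 1 F D <-> forall i j, is_derive t 1 (fun u => F u i j) (D i j).
Proof.
split.
  move=> hF i j.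
  have dF : derivable F t 1 by case: hF.
  have dij := (derivable_mxP F t 1).1 dF i j.
  apply: DeriveDef => //.
  have := derive_mx dF; rewrite (@derive_val _ _ _ _ _ _ _ hF) => ->.
  by rewrite mxE.
move=> h.
have dF : derivable F t 1.
  by apply/derivable_mxP => i j; exact: (@ex_derive _ _ _ _ _ _ _ (h i j)).
apply: DeriveDef => //.
rewrite derive_mx //; apply/matrixP => i j; rewrite mxE.
exact: (@derive_val _ _ _ _ _ _ _ (h i j)).
Qed.

End P1.
Arguments is_derive_compR {R}.


Section U.
Variable R : realType.

Lemma is_derive_ext (f g : R -> R) (x df : R) :
  (forall u, f u = g u) -> is_derive x 1 f df -> is_derive x 1 g df.
Proof. by move=> e; have -> : f = g by apply/funext. Qed.

Lemma is_derive_cont (g : R -> R) (dg : R -> R) :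
  (forall u : R, is_derive u 1 g (dg u)) -> continuous g.
Proof.
move=> h u; apply/differentiable_continuous/derivable1_diffP.
by case: (h u).
Qed.

Lemma nincr_deriv (g dg : R -> R) (a b : R) : a <= b ->
  (forall u : R, is_derive u 1 g (dg u)) -> (forall u, a <= u <= b -> dg u <= 0) ->
  g b <= g a.
Proof.
move=> ab hd hle.
apply: (@ler0_derive1_nincr R g a b) => //.
- move=> x; rewrite in_itv /= => /andP[h1 h2].
  rewrite derive1E (@derive_val _ _ _ _ _ _ _ (hd x)); apply: hle.
  by rewrite !ltW.
- by apply: continuous_subspaceT; exact: is_derive_cont.
Qed.

Lemma ndecr_deriv (g dg : R -> R) (a b : R) : a <= b ->
  (forall u : R, is_derive u 1 g (dg u)) -> (forall u, a <= u <= b -> 0 <= dg u) ->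
  g a <= g b.
Proof.
move=> ab hd hle.
have := @nincr_deriv (fun u => - g u) (fun u => - dg u) a b ab.
rewrite lerN2; apply.
by move=> u /hle; rewrite oppr_le0.
Qed.

End U.
Arguments is_derive_ext {R}.
Arguments nincr_deriv {R}.
Arguments ndecr_deriv {R}.
Lemma is_derive_ext2 (R : realType) (f g : R -> R) (x df dg : R) :
  (forall u, f u = g u) -> df = dg -> is_derive x 1 f df -> is_derive x 1 g dg.
Proof. by move=> e <-; apply: is_derive_ext. Qed.


Section U2.
Variable R : realType.
Variable n : nat.

Definition sqm (X : 'M[R]_n) : R := \sum_i \sum_j X i j ^+ 2.

Lemma sqm_ge0 X : 0 <= sqm X.
Proof. by apply: sumr_ge0 => i _; apply: sumr_ge0 => j _; exact: sqr_ge0. Qed.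

Lemma sqm_eq0 X : sqm X = 0 -> X = 0.
Proof.
move=> /eqP; rewrite psumr_eq0 => [/allP h|i _]; last first.
  by apply: sumr_ge0 => j _; exact: sqr_ge0.
apply/matrixP => i j; rewrite mxE.
have /implyP := h i (mem_index_enum _) => /(_ isT).
rewrite psumr_eq0 => [/allP /(_ j (mem_index_enum _)) /implyP /(_ isT)|]; last first.
  by move=> k _; exact: sqr_ge0.
by rewrite sqrf_eq0 => /eqP.
Qed.

Lemma sqm_bound (B X : 'M[R]_n) (M : R) : (forall i k, `|B i k| <= M) ->
  `|\sum_i \sum_j 2 * X i j * (B *m X) i j| <= 2 * n%:R * M * sqm X.
Proof.
move=> hB.
apply: (le_trans (ler_norm_sum _ _ _)).
apply: (@le_trans _ _ (\sum_i \sum_j \sum_(k < n) M * (X i j ^+ 2 + X k j ^+ 2))).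
  apply: ler_sum => i _; apply: (le_trans (ler_norm_sum _ _ _)).
  apply: ler_sum => j _; rewrite mxE mulr_sumr.
  apply: (le_trans (ler_norm_sum _ _ _)); apply: ler_sum => k _.
  have h1 := hB i k; have h0 : 0 <= `|B i k| by [].
  rewrite !normrM ger0_norm //.
  have e1 : X i j ^+ 2 = `|X i j| ^+ 2 by rewrite real_normK // num_real.
  have e2 : X k j ^+ 2 = `|X k j| ^+ 2 by rewrite real_normK // num_real.
  rewrite e1 e2.
  have := normr_ge0 (X i j); have := normr_ge0 (X k j).
  set a := `|X i j|; set b := `|X k j|; set c := `|B i k|.
  move=> hb ha.
  have hab : 0 <= M * (a - b) ^+ 2 by apply: mulr_ge0; [exact: le_trans h1|exact: sqr_ge0].
  have hab2 : 0 <= (M - c) * (2 * a * b) by apply: mulr_ge0; [rewrite subr_ge0|rewrite !mulr_ge0].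
  nra.
have S1 : \sum_(i < n) \sum_(j < n) \sum_(k < n) X i j ^+ 2 = n%:R * sqm X.
  rewrite /sqm mulr_sumr; apply: eq_bigr => i _; rewrite mulr_sumr.
  apply: eq_bigr => j _; rewrite sumr_const card_ord mulr_natl //.
have S2 : \sum_(i < n) \sum_(j < n) \sum_(k < n) X k j ^+ 2 = n%:R * sqm X.
  rewrite /sqm; under eq_bigr do rewrite exchange_big /=.
  by rewrite sumr_const card_ord mulr_natl.
have S3 : \sum_(i < n) \sum_(j < n) \sum_(k < n) M * (X i j ^+ 2 + X k j ^+ 2) =
   M * (\sum_(i < n) \sum_(j < n) \sum_(k < n) X i j ^+ 2 +
        \sum_(i < n) \sum_(j < n) \sum_(k < n) X k j ^+ 2).
  rewrite -big_split mulr_sumr; apply: eq_bigr => i _ /=.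
  rewrite -big_split mulr_sumr; apply: eq_bigr => j _ /=.
  by rewrite -big_split mulr_sumr; apply: eq_bigr => k _ /=.
rewrite S3 S1 S2.
have : 0 <= sqm X by exact: sqm_ge0.
lra.
Qed.

Lemma entry_le_norm (B : 'M[R]_n) i k : `|B i k| <= `|B|.
Proof.
rewrite [leRHS]/Num.Def.normr/= mx_normrE.
apply: le_trans; last exact: (le_bigmax _ _ (i, k)).
by [].
Qed.

Lemma is_derive_sumR (h : 'I_n -> R -> R) (dh : 'I_n -> R) (x : R) :
  (forall i, is_derive x 1 (h i) (dh i)) ->
  is_derive x 1 (fun u => \sum_i h i u) (\sum_i dh i).
Proof.
move=> hd.
have := @is_derive_sum R R R n h x 1 dh hd.
apply: is_derive_ext => u.
by rewrite fct_sumE.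
Qed.

Lemma is_derive_lin (k x : R) : is_derive x 1 (fun u : R => k * u) k.
Proof.
apply: is_derive_eq.
by rewrite /GRing.scale /= mulr1.
Qed.

Lemma is_derive_expRlin (k x : R) :
  is_derive x 1 (fun u : R => expR (k * u)) (expR (k * x) * k).
Proof.
have := is_derive_compR (fun u => k * u) expR x k (expR (k * x)) (is_derive_lin k x) (is_derive_expR _).
by apply: is_derive_ext.
Qed.

Section ode.
Variable A : R -> 'M[R]_n.
Hypothesis Acont : continuous A.

Lemma A_bounded (a b : R) : a <= b ->
  exists M : R, forall u, a <= u <= b -> forall i k, `|A u i k| <= M.
Proof.
move=> ab.
have cf : {within `[a, b], continuous (fun u => `|A u|)}.
  apply: continuous_subspaceT => x.
  apply: (@continuous_comp _ _ _ A (fun B : 'M[R]_n => `|B|)); first exact: Acont.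
  exact: norm_continuous.
have [c _ hc] := EVT_max ab cf.
exists `|A c| => u hu i k.
apply: le_trans (entry_le_norm _ _ _) _.
by apply: hc; rewrite in_itv /=.
Qed.

Lemma ode_uniq0 (X : R -> 'M[R]_n) (t0 : R) :
  (forall t : R, is_derive t 1 X (A t *m X t)) -> X t0 = 0 ->
  forall t, X t = 0.
Proof.
move=> hX X0 t.
pose D u := \sum_i \sum_j 2 * X u i j * (A u *m X u) i j.
have hD : forall u : R, is_derive u 1 (fun u => sqm (X u)) (D u).
  move=> u; apply: is_derive_sumR => i; apply: is_derive_sumR => j.
  have hij := (is_derive_mxP X u _).1 (hX u) i j.
  move: (is_deriveM hij hij); apply: is_derive_ext2.
    by move=> v; rewrite /= expr2.
  by rewrite /= /GRing.scale /=; ring.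
have s0 : sqm (X t0) = 0.
  by rewrite X0 /sqm; apply: big1 => i _; apply: big1 => j _; rewrite mxE expr0n.
apply: sqm_eq0; apply/eqP; rewrite eq_le sqm_ge0 andbT.
have [le_t0t|lt_tt0] := leP t0 t.
- have [M hM] := A_bounded le_t0t.
  pose c := 2 * n%:R * M.
  have hg : forall u : R, is_derive u 1 (fun u => expR (- c * u) * sqm (X u))
      (expR (- c * u) * D u + sqm (X u) * (expR (- c * u) * - c)).
    move=> u; move: (is_deriveM (is_derive_expRlin (- c) u) (hD u)).
    apply: is_derive_ext2 => //.
  have := nincr_deriv _ _ _ _ le_t0t hg.
  rewrite s0 mulr0 => /(_ _) h.
  have : expR (- c * t) * sqm (X t) <= 0.
    apply: h => u hu.
    have hb := sqm_bound (X u) (hM u hu).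
    rewrite -/c in hb.
    have e0 := expR_gt0 (- c * u).
    have : D u <= c * sqm (X u) by apply: le_trans (ler_norm _) hb.
    move=> hDu.
    have : 0 <= expR (- c * u) * (c * sqm (X u) - D u).
      by apply: mulr_ge0; [exact: ltW|rewrite subr_ge0].
    nra.
  by rewrite pmulr_rle0 ?expR_gt0.
- have lt' : t <= t0 by exact: ltW.
  have [M hM] := A_bounded lt'.
  pose c := 2 * n%:R * M.
  have hg : forall u : R, is_derive u 1 (fun u => expR (c * u) * sqm (X u))
      (expR (c * u) * D u + sqm (X u) * (expR (c * u) * c)).
    move=> u; move: (is_deriveM (is_derive_expRlin (c) u) (hD u)).
    apply: is_derive_ext2 => //.
  have := ndecr_deriv _ _ _ _ lt' hg.
  rewrite s0 mulr0 => /(_ _) h.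
  have : expR (c * t) * sqm (X t) <= 0.
    apply: h => u hu.
    have hb := sqm_bound (X u) (hM u hu).
    rewrite -/c in hb.
    have e0 := expR_gt0 (c * u).
    have : - D u <= c * sqm (X u).
      by apply: le_trans hb; rewrite -normrN ler_norm.
    move=> hDu.
    have : 0 <= expR (c * u) * (c * sqm (X u) + D u).
      by apply: mulr_ge0; [exact: ltW|lra].
    nra.
  by rewrite pmulr_rle0 ?expR_gt0.
Qed.

End ode.
End U2.
Arguments ode_uniq0 {R n}.
Arguments is_derive_sumR {R n}.


Section E.
Variable R : realType.

Lemma is_derive_extW (W : normedModType R) (f g : R -> W) (x : R) (df dg : W) :
  (forall u, f u = g u) -> df = dg -> is_derive x 1 f df -> is_derive x 1 g dg.
Proof. by move=> e <-; have -> : f = g by apply/funext. Qed.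

Lemma is_derive_mulc (f : R -> R) (x df c : R) :
  is_derive x 1 f df -> is_derive x 1 (fun u => f u * c) (df * c).
Proof.
move=> h; move: (is_deriveM h (is_derive_cst c x 1)).
apply: is_derive_ext2 => //.
by rewrite /GRing.scale /= mulr0 add0r mulrC.
Qed.

Lemma is_derive_mulmxr m n p (F : R -> 'M[R]_(m,n)) (D : 'M[R]_(m,n))
   (M : 'M[R]_(n,p)) (x : R) :
  is_derive x 1 F D -> is_derive x 1 (fun u => F u *m M) (D *m M).
Proof.
move=> /is_derive_mxP h; apply/is_derive_mxP => i j.
move: (is_derive_sumR (fun k u => F u i k * M k j) (fun k => D i k * M k j) x
   (fun k => is_derive_mulc (M k j) (h i k))).
by apply: is_derive_ext2 => [u|]; rewrite mxE.
Qed.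

Lemma is_derive_scalef m n (c : R -> R) (F : R -> 'M[R]_(m,n)) (dc : R)
   (D : 'M[R]_(m,n)) (x : R) :
  is_derive x 1 c dc -> is_derive x 1 F D ->
  is_derive x 1 (fun u => c u *: F u) (c x *: D + dc *: F x).
Proof.
move=> hc /is_derive_mxP h; apply/is_derive_mxP => i j.
move: (is_deriveM hc (h i j)).
apply: is_derive_ext2 => [u|]; first by rewrite !mxE.
by rewrite !mxE /GRing.scale /= [F x i j * dc]mulrC.
Qed.

End E.

Section Evol.
Variable R : realType.
Variable n : nat.
Variable A : R -> 'M[R]_n.
Variable Phi : R -> R -> 'M[R]_n.
Hypothesis Acont : continuous A.
Hypothesis hPhi : is_evol_op A Phi.

Lemma evol_sol (X : R -> 'M[R]_n) (s : R) (M : 'M[R]_n) :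
  (forall t : R, is_derive t 1 X (A t *m X t)) -> X s = M ->
  forall t, X t = Phi t s *m M.
Proof.
move=> hX hs t.
have h1 : forall u : R, is_derive u 1 (fun u => X u - Phi u s *m M)
    (A u *m (X u - Phi u s *m M)).
  move=> u; move: (is_deriveB (hX u) (is_derive_mulmxr M (hPhi.2 u s))).
  apply: is_derive_extW => //.
  by rewrite mulmxBr mulmxA.
have h2 : X s - Phi s s *m M = 0 by rewrite hs hPhi.1 mul1mx subrr.
have := ode_uniq0 A Acont (fun u => X u - Phi u s *m M) s h1 h2 t.
by move=> /= /eqP; rewrite subr_eq0 => /eqP.
Qed.

Lemma Phi_comp t s r : Phi t r = Phi t s *m Phi s r.
Proof.
apply: (evol_sol (X := fun t => Phi t r)) => //.
by move=> u; exact: hPhi.2.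
Qed.

Lemma Phi_inv t s : Phi t s *m Phi s t = 1%:M.
Proof. by rewrite -Phi_comp hPhi.1. Qed.

End Evol.


Section G.
Variable R : realType.
Variable mu : R -> R.
Hypothesis hmu : differentiable_growth_rate mu.

Definition L (u : R) := ln (mu u).

Lemma mu_gt0 u : 0 < mu u.
Proof. by case: hmu => -[]. Qed.

Lemma L_lt x y : x < y -> L x < L y.
Proof.
move=> xy; rewrite /L ltr_ln ?posrE ?mu_gt0 //.
by case: hmu => -[h _ _ _ _] _; exact: h.
Qed.

Lemma L_le x y : x <= y -> L x <= L y.
Proof. by rewrite le_eqVlt => /orP[/eqP->//|/L_lt/ltW]. Qed.

Lemma L0 : L 0 = 0.
Proof. by rewrite /L; case: hmu => -[_ _ -> _ _] _; rewrite ln1. Qed.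

Lemma L_ge0 t : 0 <= t -> 0 <= L t.
Proof. by move=> /L_le; rewrite L0. Qed.

Lemma L_le0 t : t <= 0 -> L t <= 0.
Proof. by move=> /L_le; rewrite L0. Qed.

Lemma muL u : mu u = expR (L u).
Proof. by rewrite /L lnK // posrE mu_gt0. Qed.

Lemma powR_ratio t s (a : R) : (mu t / mu s) `^ a = expR (a * (L t - L s)).
Proof.
rewrite /powR gt_eqF ?divr_gt0 ?mu_gt0 //.
by rewrite lnM ?posrE ?invr_gt0 ?mu_gt0 // lnV ?posrE ?mu_gt0.
Qed.

Lemma powR_mu s (a : R) : mu s `^ a = expR (a * L s).
Proof. by rewrite /powR gt_eqF ?mu_gt0. Qed.

Lemma sgL s : Num.sg s * L s = `|L s|.
Proof.
have [s0|s0|->] := ltgtP s 0.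
- rewrite ltr0_sg // ltr0_norm ?mulN1r //.
  by have := L_lt s0; rewrite L0.
- rewrite gtr0_sg // gtr0_norm ?mul1r //.
  by have := L_lt s0; rewrite L0.
- by rewrite sgr0 mul0r L0 normr0.
Qed.

Lemma powR_sg s (th : R) : mu s `^ (sgnR s * th) = expR (th * `|L s|).
Proof. by rewrite powR_mu /sgnR -sgL; congr expR; ring. Qed.

Lemma L_up T : exists t, 0 <= t /\ T <= L t.
Proof.
case: hmu => -[_ _ _ hinf _] _.
have := (cvgryPge mu).1 hinf (expR T).
case=> M [_ hM].
exists (`|M| + 1); split; first by rewrite addr_ge0.
have : expR T <= mu (`|M| + 1).
  apply: hM; apply: (le_lt_trans (ler_norm M)); lra.
by rewrite muL ler_expR.
Qed.

Lemma L_down T : exists t, t <= 0 /\ L t <= T.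
Proof.
case: hmu => -[_ _ _ _ h0] _.
have := (cvgr0Pnorm_lt mu).1 h0 (expR T) (expR_gt0 _).
case=> M [_ hM].
exists (- `|M| - 1); split; first by have := normr_ge0 M; lra.
have : `|mu (- `|M| - 1)| < expR T.
  apply: hM; have h := ler_norm (- M); rewrite normrN in h; lra.
rewrite gtr0_norm ?mu_gt0 // muL ltr_expR; exact: ltW.
Qed.

Lemma is_derive_mu (u : R) : is_derive u 1 mu (derive1 mu u).
Proof.
case: hmu => _ /(_ u) d.
rewrite derive1E; exact: derivableP.
Qed.

Lemma is_derive_L (u : R) : is_derive u 1 L (derive1 mu u / mu u).
Proof.
have := is_derive_compR mu (@ln R) u _ _ (is_derive_mu u) (is_derive1_ln (mu_gt0 u)).
by apply: is_derive_ext2 => // ; rewrite mulrC.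
Qed.

End G.
Arguments L {R}.

Section S.
Variable R : realType.
Variable n : nat.
Variable A : R -> 'M[R]_n.
Variable Phi : R -> R -> 'M[R]_n.
Variable mu : R -> R.
Hypothesis Acont : continuous A.
Hypothesis hPhi : is_evol_op A Phi.
Hypothesis hmu : differentiable_growth_rate mu.

Definition Cg (g : R) := fun t => A t - (g * (derive1 mu t / mu t))%:M.
Definition psi (g : R) (t s : R) : 'M[R]_n :=
  (expR (- g * L mu t) * expR (g * L mu s)) *: Phi t s.

Lemma is_derive_expL (c u : R) :
  is_derive u 1 (fun u => expR (c * L mu u))
    (expR (c * L mu u) * (c * (derive1 mu u / mu u))).
Proof.
have h1 : is_derive u 1 (fun u => c * L mu u) (c * (derive1 mu u / mu u)).
  move: (is_derive_mulc c (is_derive_L hmu u)).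
  by apply: is_derive_ext2 => [v|]; rewrite mulrC.
have := is_derive_compR _ expR u _ _ h1 (is_derive_expR _).
by apply: is_derive_ext2 => //; rewrite mulrC.
Qed.

Lemma expR_NK (x : R) : expR (- x) * expR x = 1.
Proof. by rewrite -expRD addNr expR0. Qed.

Lemma psi_evol g : is_evol_op (Cg g) (psi g).
Proof.
split.
  by move=> s; rewrite /psi hPhi.1 mulNr expR_NK scale1r.
move=> t s.
have hc := is_derive_mulc (expR (g * L mu s)) (is_derive_expL (- g) t).
move: (is_derive_scalef hc (hPhi.2 t s)).
apply: is_derive_extW => //.
rewrite /Cg /psi mulmxBl mul_scalar_mx -scalemxAr scalerA.
rewrite -scaleNr -[in RHS]scaleNr [in RHS]scalerA.
congr (_ + _); congr (_ *: _); rewrite /GRing.scale /=; ring.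
Qed.

Lemma psi_unique g (Psi : R -> R -> 'M[R]_n) :
  is_evol_op (Cg g) Psi -> forall t s, Psi t s = psi g t s.
Proof.
move=> hPsi t s.
have hY : forall u : R, is_derive u 1 (fun u => expR (g * L mu u) *: Psi u s)
    (A u *m (expR (g * L mu u) *: Psi u s)).
  move=> u; move: (is_derive_scalef (is_derive_expL g u) (hPsi.2 u s)).
  apply: is_derive_extW => //.
  rewrite /Cg mulmxBl mul_scalar_mx scalerBr.
  by rewrite scalerA -scalemxAr subrK.
have := evol_sol Acont hPhi hY (esym (erefl (expR (g * L mu s) *: Psi s s))) t.
rewrite hPsi.1 -scalemxAr mulmx1 => e.
have -> : Psi t s = expR (- g * L mu t) *: (expR (g * L mu t) *: Psi t s).
  by rewrite scalerA mulNr expR_NK scale1r.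
by rewrite e scalerA /psi.
Qed.

End S.
Arguments Cg {R n}.
Arguments psi {R n}.


Section Nm.
Variable R : realType.
Variable n : nat.
Variable N : 'cV[R]_n -> R.
Hypothesis hN : is_norm N.

Lemma N_ge0 x : 0 <= N x. Proof. by case: hN. Qed.
Lemma N_eq0 x : N x = 0 -> x = 0. Proof. by case: hN => _ h _ _; exact: h. Qed.
Lemma NZ a x : N (a *: x) = `|a| * N x. Proof. by case: hN => _ _ h _; exact: h. Qed.
Lemma ND x y : N (x + y) <= N x + N y. Proof. by case: hN => _ _ _ h; exact: h. Qed.
Lemma N0 : N 0 = 0. Proof. by rewrite -(scale0r 0) NZ normr0 mul0r. Qed.
Lemma NN x : N (- x) = N x.
Proof. by rewrite -scaleN1r NZ normrN normr1 mul1r. Qed.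
Lemma NB x y : N (x - y) <= N x + N y.
Proof. by rewrite -(NN y); exact: ND. Qed.

End Nm.

Section Small.
Variable R : realType.
Variable mu : R -> R.
Hypothesis hmu : differentiable_growth_rate mu.

Lemma small_up (x C c : R) : c < 0 -> 0 <= C ->
  (forall t, 0 <= t -> x <= C * expR (c * L mu t)) -> x <= 0.
Proof.
move=> c0 C0 h; rewrite leNgt; apply/negP => x0.
pose C' := C + 1.
have C'0 : 0 < C' by rewrite /C'; lra.
have hx2 : 0 < x / (2 * C') by apply: divr_gt0 => //; lra.
have [t [t0 ht]] := L_up hmu (ln (x / (2 * C')) / c).
have h1 : c * L mu t <= ln (x / (2 * C')).
  have := ler_wnM2l (ltW c0) ht.
  by rewrite mulrCA divff ?mulr1 // lt_eqF.
have h2 : expR (c * L mu t) <= x / (2 * C').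
  by rewrite -[X in _ <= X]lnK ?posrE // ler_expR.
have h3 := h t t0.
have h4 : C * expR (c * L mu t) <= C' * (x / (2 * C')).
  apply: ler_pM; [exact: C0|exact: expR_ge0|rewrite /C'; lra|exact: h2].
have : C' * (x / (2 * C')) = x / 2.
  by field; rewrite /C'; lra.
lra.
Qed.

Lemma small_down (x C c : R) : 0 < c -> 0 <= C ->
  (forall t, t <= 0 -> x <= C * expR (c * L mu t)) -> x <= 0.
Proof.
move=> c0 C0 h; rewrite leNgt; apply/negP => x0.
pose C' := C + 1.
have C'0 : 0 < C' by rewrite /C'; lra.
have hx2 : 0 < x / (2 * C') by apply: divr_gt0 => //; lra.
have [t [t0 ht]] := L_down hmu (ln (x / (2 * C')) / c).
have h1 : c * L mu t <= ln (x / (2 * C')).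
  rewrite -(@ler_pM2l _ c) // in ht.
  by rewrite (le_trans ht) // mulrCA divff ?mulr1 // gt_eqF.
have h2 : expR (c * L mu t) <= x / (2 * C').
  by rewrite -[X in _ <= X]lnK ?posrE // ler_expR.
have h3 := h t t0.
have h4 : C * expR (c * L mu t) <= C' * (x / (2 * C')).
  apply: ler_pM; [exact: C0|exact: expR_ge0|rewrite /C'; lra|exact: h2].
have : C' * (x / (2 * C')) = x / 2.
  by field; rewrite /C'; lra.
lra.
Qed.

End Small.

Section Fib.
Variable R : realType.
Variable n : nat.
Variable N : 'cV[R]_n -> R.
Variable A : R -> 'M[R]_n.
Variable Phi : R -> R -> 'M[R]_n.
Variable mu : R -> R.
Hypothesis Acont : continuous A.
Hypothesis hPhi : is_evol_op A Phi.
Hypothesis hmu : differentiable_growth_rate mu.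
Hypothesis hN : is_norm N.
Variable g : R.

Local Notation Ps := (psi Phi mu g).

Lemma psi_comp t r s : Ps t s = Ps t r *m Ps r s.
Proof.
rewrite /psi -scalemxAl -scalemxAr scalerA -(Phi_comp Acont hPhi).
congr (_ *: _); rewrite -!expRD; congr expR; ring.
Qed.

Lemma psi_id t : Ps t t = 1%:M.
Proof. by rewrite /psi hPhi.1 mulNr expR_NK scale1r. Qed.

Lemma psi_inv t s : Ps t s *m Ps s t = 1%:M.
Proof. by rewrite -psi_comp psi_id. Qed.

Lemma N_psi t s xi : N (Ps t s *m xi) =
  expR (g * L mu s) * (N (Phi t s *m xi) * mu t `^ (- g)).
Proof.
rewrite /psi -scalemxAl (NZ hN) ger0_norm; last by rewrite mulr_ge0 ?expR_ge0.
by rewrite (powR_mu hmu); ring.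
Qed.

Lemma Uman_psi s xi : Uman N mu Phi g (s, xi) <->
  exists M, forall t, 0 <= t -> N (Ps t s *m xi) <= M.
Proof.
split.
  case=> M hM; exists (expR (g * L mu s) * M) => t t0.
  by rewrite N_psi ler_pM2l ?expR_gt0 //; exact: hM.
case=> M hM; exists (expR (- g * L mu s) * M) => t t0 /=.
have := hM t t0; rewrite N_psi => h.
rewrite -[X in X <= _](mul1r) -(expR_NK (g * L mu s)) -mulrA mulNr.
by rewrite ler_pM2l ?expR_gt0.
Qed.

Lemma Vman_psi s xi : Vman N mu Phi g (s, xi) <->
  exists M, forall t, t <= 0 -> N (Ps t s *m xi) <= M.
Proof.
split.
  case=> M hM; exists (expR (g * L mu s) * M) => t t0.
  by rewrite N_psi ler_pM2l ?expR_gt0 //; exact: hM.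
case=> M hM; exists (expR (- g * L mu s) * M) => t t0 /=.
have := hM t t0; rewrite N_psi => h.
rewrite -[X in X <= _](mul1r) -(expR_NK (g * L mu s)) -mulrA mulNr.
by rewrite ler_pM2l ?expR_gt0.
Qed.

End Fib.

Section Dich.
Variable R : realType.
Variable n : nat.
Variable N : 'cV[R]_n -> R.
Variable A : R -> 'M[R]_n.
Variable Phi : R -> R -> 'M[R]_n.
Variable mu : R -> R.
Hypothesis Acont : continuous A.
Hypothesis hPhi : is_evol_op A Phi.
Hypothesis hmu : differentiable_growth_rate mu.
Hypothesis hN : is_norm N.
Variable g : R.
Local Notation Ps := (psi Phi mu g).
Variables (P : R -> 'M[R]_n) (K al be th nu : R).
Hypothesis hPi : forall t, P t *m P t = P t.
Hypothesis hPc : forall t s, P t *m Ps t s = Ps t s *m P s.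
Hypothesis hK : 1 <= K.
Hypothesis hal : al < 0.
Hypothesis hbe : 0 < be.
Hypothesis hth : 0 <= th.
Hypothesis hnu : 0 <= nu.
Hypothesis hat : al + th < 0.
Hypothesis hbn : 0 < be - nu.
Hypothesis hP : forall t s xi, s <= t ->
  N (Ps t s *m P s *m xi) <= K * (mu t / mu s) `^ al * mu s `^ (sgnR s * th) * N xi.
Hypothesis hQ : forall t s xi, t <= s ->
  N (Ps t s *m (1%:M - P s) *m xi) <= K * (mu t / mu s) `^ be * mu s `^ (sgnR s * nu) * N xi.

Lemma hPe t s xi : s <= t ->
  N (Ps t s *m P s *m xi) <= K * expR (al * (L mu t - L mu s)) * expR (th * `|L mu s|) * N xi.
Proof. by move=> /hP; rewrite (powR_ratio hmu) (powR_sg hmu). Qed.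

Lemma hQe t s xi : t <= s ->
  N (Ps t s *m (1%:M - P s) *m xi) <= K * expR (be * (L mu t - L mu s)) * expR (nu * `|L mu s|) * N xi.
Proof. by move=> /hQ; rewrite (powR_ratio hmu) (powR_sg hmu). Qed.

Lemma hQc t s : (1%:M - P t) *m Ps t s = Ps t s *m (1%:M - P s).
Proof. by rewrite mulmxBl mulmxBr mul1mx mulmx1 hPc. Qed.

Lemma hQi t : (1%:M - P t) *m (1%:M - P t) = 1%:M - P t.
Proof. by rewrite mulmxBl !mulmxBr !mul1mx !mulmx1 hPi subrr subr0. Qed.

Lemma N_Pt0 t eta : 0 <= t -> N (Ps t 0 *m P 0 *m eta) <= K * N eta.
Proof.
move=> t0; apply: le_trans (hPe eta t0) _.
rewrite (L0 hmu) normr0 mulr0 expR0 mulr1 subr0.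
have : expR (al * L mu t) <= 1.
  rewrite -expR0 ler_expR; apply: mulr_le0_ge0; [exact: ltW|exact: L_ge0].
move=> he; have hn := N_ge0 hN eta.
have : 0 <= K * ((1 - expR (al * L mu t)) * N eta).
  apply: mulr_ge0; first exact: le_trans ler01 hK.
  by apply: mulr_ge0; [lra|].
nra.
Qed.

Lemma N_Qt0 t eta : t <= 0 -> N (Ps t 0 *m (1%:M - P 0) *m eta) <= K * N eta.
Proof.
move=> t0; apply: le_trans (hQe eta t0) _.
rewrite (L0 hmu) normr0 mulr0 expR0 mulr1 subr0.
have : expR (be * L mu t) <= 1.
  rewrite -expR0 ler_expR; apply: mulr_ge0_le0; [exact: ltW|exact: L_le0].
move=> he; have hn := N_ge0 hN eta.
have : 0 <= K * ((1 - expR (be * L mu t)) * N eta).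
  apply: mulr_ge0; first exact: le_trans ler01 hK.
  by apply: mulr_ge0; [lra|].
nra.
Qed.

Lemma Ufib s xi : Uman N mu Phi g (s, xi) <-> P s *m xi = xi.
Proof.
split; last first.
  move=> hx; apply/(Uman_psi Phi hmu hN); exists (K * N (Ps 0 s *m xi)) => t t0.
  have -> : Ps t s *m xi = Ps t 0 *m P 0 *m (Ps 0 s *m xi).
    rewrite -{1}hx (psi_comp mu Acont hPhi g t 0 s) -!mulmxA.
    by rewrite [Ps 0 s *m (P s *m xi)]mulmxA -hPc -mulmxA.
  exact: N_Pt0.
move=> /(Uman_psi Phi hmu hN) [M hM].
have [eta eeta] : exists eta, eta = Ps 0 s *m xi by eexists.
have e1 : forall t, Ps t 0 *m eta = Ps t s *m xi.
  by move=> t; rewrite eeta mulmxA -(psi_comp mu Acont hPhi g).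
set w := fun t => Ps t 0 *m (1%:M - P 0) *m eta.
have hw : forall t, 0 <= t -> N (w t) <= M + K * N eta.
  move=> t t0.
  have -> : w t = Ps t 0 *m eta - Ps t 0 *m P 0 *m eta.
    by rewrite /w mulmxBr mulmx1 mulmxBl.
  apply: le_trans (NB hN _ _) _; apply: lerD; first by rewrite e1; exact: hM.
  exact: N_Pt0.
have ew : forall t, (1%:M - P 0) *m eta = Ps 0 t *m (1%:M - P t) *m w t.
  move=> t; rewrite /w -!mulmxA [(1%:M - P t) *m (Ps t 0 *m _)]mulmxA (hQc t 0).
  rewrite -mulmxA [Ps 0 t *m (Ps t 0 *m _)]mulmxA (psi_inv mu Acont hPhi g) mul1mx.
  by rewrite mulmxA hQi.
have M0 : 0 <= M by apply: le_trans (hM 0 (lexx _)); exact: N_ge0.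
have hsm : N ((1%:M - P 0) *m eta) <= 0.
  apply: (small_up hmu (c := nu - be) (C := K * (M + K * N eta))).
  - by have := hbn; lra.
  - have := hK; move=> hK'.
    apply: mulr_ge0; first lra.
    by apply: addr_ge0 => //; apply: mulr_ge0; [lra|exact: N_ge0].
  move=> t t0; rewrite (ew t).
  apply: le_trans (hQe _ t0) _.
  rewrite (L0 hmu) sub0r ger0_norm ?(L_ge0 hmu) //.
  have -> : K * expR (be * - L mu t) * expR (nu * L mu t) * N (w t) =
      K * N (w t) * expR ((nu - be) * L mu t).
    have E : expR (be * - L mu t) * expR (nu * L mu t) = expR ((nu - be) * L mu t).
      by rewrite -expRD; congr expR; ring.
    by rewrite -E; ring.
  apply: ler_wpM2r; first exact: expR_ge0.
  apply: ler_wpM2l; [have := hK; lra|exact: hw].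
have heta : (1%:M - P 0) *m eta = 0.
  by apply: (N_eq0 hN); apply/eqP; rewrite eq_le hsm N_ge0.
have heta2 : P 0 *m eta = eta.
  by move: heta; rewrite mulmxBl mul1mx => /eqP; rewrite subr_eq0 => /eqP.
have exi : xi = Ps s 0 *m eta by rewrite eeta mulmxA (psi_inv mu Acont hPhi g) mul1mx.
by rewrite exi mulmxA hPc -mulmxA heta2.
Qed.


Lemma Vfib s xi : Vman N mu Phi g (s, xi) <-> P s *m xi = 0.
Proof.
split; last first.
  move=> hx; apply/(Vman_psi Phi hmu hN); exists (K * N (Ps 0 s *m xi)) => t t0.
  have hx' : (1%:M - P s) *m xi = xi by rewrite mulmxBl mul1mx hx subr0.
  have -> : Ps t s *m xi = Ps t 0 *m (1%:M - P 0) *m (Ps 0 s *m xi).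
    rewrite -{1}hx' (psi_comp mu Acont hPhi g t 0 s) -!mulmxA.
    by rewrite [Ps 0 s *m ((1%:M - P s) *m xi)]mulmxA -hQc -mulmxA.
  exact: N_Qt0.
move=> /(Vman_psi Phi hmu hN) [M hM].
have [eta eeta] : exists eta, eta = Ps 0 s *m xi by eexists.
have e1 : forall t, Ps t 0 *m eta = Ps t s *m xi.
  by move=> t; rewrite eeta mulmxA -(psi_comp mu Acont hPhi g).
set w := fun t => Ps t 0 *m P 0 *m eta.
have hw : forall t, t <= 0 -> N (w t) <= M + K * N eta.
  move=> t t0.
  have -> : w t = Ps t 0 *m eta - Ps t 0 *m (1%:M - P 0) *m eta.
    by rewrite /w mulmxBr mulmx1 mulmxBl opprB addrC subrK.
  apply: le_trans (NB hN _ _) _; apply: lerD; first by rewrite e1; exact: hM.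
  exact: N_Qt0.
have ew : forall t, P 0 *m eta = Ps 0 t *m P t *m w t.
  move=> t; rewrite /w -!mulmxA [P t *m (Ps t 0 *m _)]mulmxA (hPc t 0).
  rewrite -mulmxA [Ps 0 t *m (Ps t 0 *m _)]mulmxA (psi_inv mu Acont hPhi g) mul1mx.
  by rewrite mulmxA hPi.
have M0 : 0 <= M by apply: le_trans (hM 0 (lexx _)); exact: N_ge0.
have hsm : N (P 0 *m eta) <= 0.
  apply: (small_down hmu (c := - (al + th)) (C := K * (M + K * N eta))).
  - by have := hat; lra.
  - have := hK; move=> hK'.
    apply: mulr_ge0; first lra.
    by apply: addr_ge0 => //; apply: mulr_ge0; [lra|exact: N_ge0].
  move=> t t0; rewrite (ew t).
  apply: le_trans (hPe _ t0) _.
  rewrite (L0 hmu) sub0r ler0_norm ?(L_le0 hmu) //.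
  have -> : K * expR (al * - L mu t) * expR (th * - L mu t) * N (w t) =
      K * N (w t) * expR (- (al + th) * L mu t).
    have E : expR (al * - L mu t) * expR (th * - L mu t) = expR (- (al + th) * L mu t).
      by rewrite -expRD; congr expR; ring.
    by rewrite -E; ring.
  apply: ler_wpM2r; first exact: expR_ge0.
  apply: ler_wpM2l; [have := hK; lra|exact: hw].
have heta : P 0 *m eta = 0.
  by apply: (N_eq0 hN); apply/eqP; rewrite eq_le hsm N_ge0.
have exi : xi = Ps s 0 *m eta by rewrite eeta mulmxA (psi_inv mu Acont hPhi g) mul1mx.
by rewrite exi mulmxA hPc -mulmxA heta mulmx0.
Qed.

End Dich.


Section LA.
Variable R : realType.
Variable n : nat.

Lemma setdim_rs m (S : set 'cV[R]_n) (B : 'M[R]_(m, n)) :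
  (forall xi, S xi <-> (xi^T <= B)%MS) -> setdim S = \rank B.
Proof.
move=> hS; apply/eqP; rewrite eqn_leq; apply/andP; split.
  apply/bigmax_leqP => k /asboolP [M [hM hr]]; rewrite -hr.
  have : (M^T <= B)%MS.
    by apply/row_subP => j; rewrite -tr_col; apply/(hS _).1; exact: hM.
  by move=> /mxrankS; rewrite mxrank_tr.
have hk : (\rank B < n.+1)%N by rewrite ltnS rank_leq_col.
apply: (@leq_bigmax_cond _ _ _ (Ordinal hk)) => /=.
apply/asboolP; exists (row_base B)^T; split.
  move=> j; apply/(hS _).2; rewrite -tr_row trmxK.
  by apply: submx_trans (row_sub _ _) _; rewrite eq_row_base.
by rewrite mxrank_tr eq_row_base.
Qed.

Lemma inter_nonzero m1 m2 (B1 : 'M[R]_(m1, n)) (B2 : 'M[R]_(m2, n)) :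
  (n < \rank B1 + \rank B2)%N ->
  exists xi : 'cV[R]_n, xi != 0 /\ (xi^T <= B1)%MS /\ (xi^T <= B2)%MS.
Proof.
move=> hr.
have hc : (0 < \rank (B1 :&: B2))%N.
  move: hr; rewrite -mxrank_sum_cap.
  have := rank_leq_col (B1 + B2)%MS; lia.
have : (B1 :&: B2)%MS != 0 by rewrite -mxrank_eq0 -lt0n.
case/eqP/matrixP/boolp.existsNP => i /boolp.existsNP [j hij].
exists (row i (B1 :&: B2)%MS)^T; split.
  apply/eqP => /(congr1 (fun c : 'cV[R]_n => c j 0)); rewrite !mxE => e; apply: hij.
  by rewrite e mxE.
rewrite trmxK; split; apply: submx_trans (row_sub _ _) _.
  exact: capmxSl.
exact: capmxSr.
Qed.

Lemma fix_rs (P : 'M[R]_n) : P *m P = P ->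
  forall xi : 'cV[R]_n, P *m xi = xi <-> (xi^T <= P^T)%MS.
Proof.
move=> hP xi; split.
  by move=> <-; rewrite trmx_mul submxMl.
case/submxP => D hD.
have -> : xi = P *m D^T by rewrite -[xi]trmxK hD trmx_mul trmxK.
by rewrite mulmxA hP.
Qed.

Lemma ker_rs (P : 'M[R]_n) (xi : 'cV[R]_n) :
  P *m xi = 0 <-> (xi^T <= kermx P^T)%MS.
Proof.
rewrite sub_kermx -trmx_mul; split; first by move=> ->; rewrite trmx0.
by move=> /eqP /(congr1 trmx); rewrite trmxK trmx0.
Qed.

Lemma mx_eq_cols (A B : 'M[R]_n) :
  (forall xi : 'cV[R]_n, A *m xi = B *m xi) -> A = B.
Proof.
move=> h; apply/matrixP => i j.
have := h (delta_mx j 0); rewrite -!colE => /(congr1 (fun c : 'cV[R]_n => c i 0)).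
by rewrite !mxE.
Qed.

End LA.


Definition DichP (R : realType) (n : nat) (N : 'cV[R]_n -> R) (mu : R -> R)
    (Psi : R -> R -> 'M[R]_n) (P : R -> 'M[R]_n) : Prop :=
  exists (K alpha beta theta nu : R),
    [/\ (forall t, P t *m P t = P t),
        (forall t s, P t *m Psi t s = Psi t s *m P s),
        [/\ 1 <= K, alpha < 0, 0 < beta, 0 <= theta & 0 <= nu] /\
          (alpha + theta < 0 /\ 0 < beta - nu),
        (forall t s xi, s <= t ->
           N (Psi t s *m P s *m xi)
             <= K * (mu t / mu s) `^ alpha * mu s `^ (sgnR s * theta) * N xi) &
        (forall t s xi, t <= s ->
           N (Psi t s *m (1%:M - P s) *m xi)
             <= K * (mu t / mu s) `^ beta * mu s `^ (sgnR s * nu) * N xi)].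

Lemma NmuD_DichP (R : realType) (n : nat) (N : 'cV[R]_n -> R) (mu : R -> R)
    (Psi : R -> R -> 'M[R]_n) : NmuD N mu Psi <-> exists P, DichP N mu Psi P.
Proof. by []. Qed.

Section SH.
Variable R : realType.
Variable n : nat.
Variable N : 'cV[R]_n -> R.
Variable A : R -> 'M[R]_n.
Variable Phi : R -> R -> 'M[R]_n.
Variable mu : R -> R.
Hypothesis Acont : continuous A.
Hypothesis hPhi : is_evol_op A Phi.
Hypothesis hmu : differentiable_growth_rate mu.
Hypothesis hN : is_norm N.

Local Notation Ps := (psi Phi mu).

Lemma psi_shift g g' t s :
  Ps g' t s = expR ((g - g') * (L mu t - L mu s)) *: Ps g t s.
Proof.
rewrite /psi scalerA; congr (_ *: _); rewrite -!expRD; congr expR; ring.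
Qed.

Lemma psi_scal g t s : exists c, 0 < c /\ Ps g t s = c *: Phi t s.
Proof. by exists (expR (- g * L mu t) * expR (g * L mu s)); rewrite mulr_gt0 ?expR_gt0. Qed.

Lemma comm_psi g g' (P : R -> 'M[R]_n) :
  (forall t s, P t *m Ps g t s = Ps g t s *m P s) ->
  (forall t s, P t *m Ps g' t s = Ps g' t s *m P s).
Proof.
move=> h t s; rewrite (psi_shift g) -scalemxAl -scalemxAr; congr (_ *: _); exact: h.
Qed.

Lemma N_psi_shift g g' t s (M : 'M[R]_n) xi :
  N (Ps g' t s *m M *m xi) = expR ((g - g') * (L mu t - L mu s)) * N (Ps g t s *m M *m xi).
Proof. by rewrite (psi_shift g) -!scalemxAl (NZ hN) ger0_norm ?expR_ge0. Qed.

Lemma dshift (ga gb g' : R) (P : R -> 'M[R]_n) (Ka al th Kb be nu : R) :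
  (forall t, P t *m P t = P t) ->
  (forall t s, P t *m Ps ga t s = Ps ga t s *m P s) ->
  1 <= Ka -> 0 <= th -> 1 <= Kb -> 0 <= nu ->
  (forall t s xi, s <= t -> N (Ps ga t s *m P s *m xi)
      <= Ka * (mu t / mu s) `^ al * mu s `^ (sgnR s * th) * N xi) ->
  (forall t s xi, t <= s -> N (Ps gb t s *m (1%:M - P s) *m xi)
      <= Kb * (mu t / mu s) `^ be * mu s `^ (sgnR s * nu) * N xi) ->
  ga + al + th < g' -> g' < gb + be - nu ->
  DichP N mu (Ps g') P.
Proof.
move=> hPi hPc hKa hth hKb hnu hP hQ h1 h2.
exists (Ka + Kb), (al + ga - g'), (be + gb - g'), th, nu; split => //.
- exact: comm_psi hPc.
- split; first (split; lra).
  split; lra.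
- move=> t s xi st.
  rewrite (N_psi_shift ga) (powR_ratio hmu) (powR_sg hmu).
  have := hP t s xi st; rewrite (powR_ratio hmu) (powR_sg hmu) => hb.
  have e0 := expR_gt0 ((ga - g') * (L mu t - L mu s)).
  apply: le_trans (ler_wpM2l (ltW e0) hb) _.
  have E : expR ((ga - g') * (L mu t - L mu s)) * expR (al * (L mu t - L mu s)) =
           expR ((al + ga - g') * (L mu t - L mu s)).
    by rewrite -expRD; congr expR; ring.
  set a := expR ((al + ga - g') * (L mu t - L mu s)).
  set b := expR (th * `|L mu s|).
  have ha : 0 <= a by exact: expR_ge0.
  have hb' : 0 <= b by exact: expR_ge0.
  have hn := N_ge0 hN xi.
  have -> : expR ((ga - g') * (L mu t - L mu s)) * (Ka * expR (al * (L mu t - L mu s)) * b * N xi)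
       = Ka * (a * b * N xi) by rewrite /a -E; ring.
  have -> : (Ka + Kb) * a * b * N xi = (Ka + Kb) * (a * b * N xi) by ring.
  apply: ler_wpM2r; first by rewrite !mulr_ge0.
  lra.
- move=> t s xi ts.
  rewrite (N_psi_shift gb) (powR_ratio hmu) (powR_sg hmu).
  have := hQ t s xi ts; rewrite (powR_ratio hmu) (powR_sg hmu) => hb.
  have e0 := expR_gt0 ((gb - g') * (L mu t - L mu s)).
  apply: le_trans (ler_wpM2l (ltW e0) hb) _.
  have E : expR ((gb - g') * (L mu t - L mu s)) * expR (be * (L mu t - L mu s)) =
           expR ((be + gb - g') * (L mu t - L mu s)).
    by rewrite -expRD; congr expR; ring.
  set a := expR ((be + gb - g') * (L mu t - L mu s)).
  set b := expR (nu * `|L mu s|).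
  have ha : 0 <= a by exact: expR_ge0.
  have hb' : 0 <= b by exact: expR_ge0.
  have hn := N_ge0 hN xi.
  have -> : expR ((gb - g') * (L mu t - L mu s)) * (Kb * expR (be * (L mu t - L mu s)) * b * N xi)
       = Kb * (a * b * N xi) by rewrite /a -E; ring.
  have -> : (Ka + Kb) * a * b * N xi = (Ka + Kb) * (a * b * N xi) by ring.
  apply: ler_wpM2r; first by rewrite !mulr_ge0.
  lra.
Qed.

End SH.


Section M.
Variable R : realType.
Variable n : nat.
Variable N : 'cV[R]_n -> R.
Variable A : R -> 'M[R]_n.
Variable Phi : R -> R -> 'M[R]_n.
Variable mu : R -> R.
Hypothesis Acont : continuous A.
Hypothesis hPhi : is_evol_op A Phi.
Hypothesis hmu : differentiable_growth_rate mu.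
Hypothesis hN : is_norm N.

Local Notation Ps := (psi Phi mu).
Local Notation U := (Uman N mu Phi).
Local Notation V := (Vman N mu Phi).

Lemma dich_fibers g P : DichP N mu (Ps g) P ->
  [/\ (forall t, P t *m P t = P t),
      (forall t s, P t *m Ps g t s = Ps g t s *m P s),
      (forall s xi, U g (s, xi) <-> P s *m xi = xi) &
      (forall s xi, V g (s, xi) <-> P s *m xi = 0)].
Proof.
case=> K [al [be [th [nu [hPi hPc [[hK hal hbe hth hnu] [hat hbn]] hP hQ]]]]].
split => // s xi.
  eapply (Ufib Acont hPhi hmu hN); [exact: hPi|exact: hPc|exact: hK|exact: hal|exact: hbn|exact: hP|exact: hQ].
eapply (Vfib Acont hPhi hmu hN); [exact: hPi|exact: hPc|exact: hK|exact: hbe|exact: hat|exact: hP|exact: hQ].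
Qed.


Lemma loc g P : DichP N mu (Ps g) P ->
  exists2 e, 0 < e & forall g', `|g' - g| < e -> DichP N mu (Ps g') P.
Proof.
case=> K [al [be [th [nu [hPi hPc [[hK hal hbe hth hnu] [hat hbn]] hP hQ]]]]].
exists (Num.min (- (al + th)) (be - nu)).
  by rewrite lt_min; apply/andP; split; lra.
move=> g'; rewrite lt_min => /andP[h1 h2].
move: h1 h2; rewrite !ltr_norml => /andP[h1 h1'] /andP[h2 h2'].
apply: (dshift hmu hN hPi hPc hK hth hK hnu hP hQ); lra.
Qed.

Lemma bridge g1 g2 g P : DichP N mu (Ps g1) P -> DichP N mu (Ps g2) P ->
  g1 <= g <= g2 -> DichP N mu (Ps g) P.
Proof.
case=> K1 [al1 [be1 [th1 [nu1 [hPi hPc [[hK1 hal1 hbe1 hth1 hnu1] [hat1 hbn1]] hP1 hQ1]]]]].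
case=> K2 [al2 [be2 [th2 [nu2 [_ _ [[hK2 hal2 hbe2 hth2 hnu2] [hat2 hbn2]] hP2 hQ2]]]]].
move=> /andP[a b].
apply: (dshift hmu hN hPi hPc hK1 hth1 hK2 hnu2 hP1 hQ2); lra.
Qed.

Lemma Pconj g P : DichP N mu (Ps g) P ->
  forall s, P s = Phi s 0 *m P 0 *m Phi 0 s.
Proof.
case/dich_fibers => hPi hPc _ _ s.
have -> : P s = Ps g s 0 *m P 0 *m Ps g 0 s.
  by rewrite -hPc -mulmxA (psi_inv mu Acont hPhi g) mulmx1.
rewrite /psi -!scalemxAl -scalemxAr scalerA.
have -> : expR (- g * L mu s) * expR (g * L mu 0) * (expR (- g * L mu 0) * expR (g * L mu s)) = 1.
  by rewrite -!expRD -expR0; congr expR; ring.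
by rewrite scale1r.
Qed.

Lemma monoU g1 g2 s xi : g1 <= g2 -> U g1 (s, xi) -> U g2 (s, xi).
Proof.
move=> g12 [M hM]; exists M => t t0.
apply: le_trans (hM t t0); apply: ler_wpM2l; first exact: N_ge0 hN _.
rewrite !(powR_mu hmu) ler_expR.
have := L_ge0 hmu t0; nra.
Qed.

Lemma monoV g1 g2 s xi : g1 <= g2 -> V g2 (s, xi) -> V g1 (s, xi).
Proof.
move=> g12 [M hM]; exists M => t t0.
apply: le_trans (hM t t0); apply: ler_wpM2l; first exact: N_ge0 hN _.
rewrite !(powR_mu hmu) ler_expR.
have := L_le0 hmu t0; nra.
Qed.

Lemma rho_DichP g : rhoND N mu A g -> exists P, DichP N mu (Ps g) P.
Proof.
move=> /boolp.contrapT [Psi [hPsi hD]].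
have -> : Ps g = Psi.
  apply/funext => t; apply/funext => s.
  by rewrite (psi_unique Acont hPhi hmu hPsi).
exact/NmuD_DichP.
Qed.

Lemma DichP_rho g P : DichP N mu (Ps g) P -> rhoND N mu A g.
Proof.
move=> hD /=; rewrite /SigmaND /= => hS; apply: hS.
exists (Ps g); split; first by have := psi_evol hPhi hmu g; rewrite /Cg.
by apply/NmuD_DichP; exists P.
Qed.

End M.


Section F.
Variable R : realType.
Variable n : nat.
Variable N : 'cV[R]_n -> R.
Variable A : R -> 'M[R]_n.
Variable Phi : R -> R -> 'M[R]_n.
Variable mu : R -> R.
Hypothesis Acont : continuous A.
Hypothesis hPhi : is_evol_op A Phi.
Hypothesis hmu : differentiable_growth_rate mu.
Hypothesis hN : is_norm N.

Local Notation Ps := (psi Phi mu).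
Local Notation U := (Uman N mu Phi).
Local Notation V := (Vman N mu Phi).

Lemma noSpec_U g1 g2 : g1 <= g2 ->
  (forall g, g1 <= g <= g2 -> rhoND N mu A g) ->
  forall s xi, U g2 (s, xi) <-> U g1 (s, xi).
Proof.
move=> g12 hrho.
pose Good g := forall s xi, U g (s, xi) <-> U g1 (s, xi).
pose S := [set g | g1 <= g <= g2 /\ Good g].
have S1 : S g1 by split; [rewrite lexx g12|].
have hub : ubound S g2 by move=> g [/andP[]].
have hsup : has_sup S by split; [exists g1|exists g2].
set gs := sup S.
have gs1 : g1 <= gs by exact: (sup_upper_bound hsup).
have gs2 : gs <= g2 by apply: ge_sup => //; exists g1.
have [P hD] := rho_DichP Acont hPhi hmu (hrho gs (introT andP (conj gs1 gs2))).
have [e e0 he] := loc hmu hN hD.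
have near : forall g', `|g' - gs| < e -> forall s xi, U g' (s, xi) <-> U gs (s, xi).
  move=> g' hg' s xi.
  have [_ _ hU' _] := dich_fibers Acont hPhi hmu hN (he g' hg').
  have [_ _ hU _] := dich_fibers Acont hPhi hmu hN hD.
  by rewrite hU' hU.
have Ggs : Good gs.
  have [h [/andP[h1 h2] Gh] hh] := sup_adherent e0 hsup.
  have hhs : h <= gs.
    by apply: (sup_upper_bound hsup); split => //; rewrite h1 h2.
  have : `|h - gs| < e by rewrite ler0_norm ?subr_le0 //; rewrite -/gs in hh; lra.
  move=> /near hn s xi; rewrite -hn; exact: Gh.
have : gs = g2.
  apply/eqP; rewrite eq_le gs2 /=; rewrite leNgt; apply/negP => lt2.
  pose g' := Num.min (gs + e / 2) g2.
  have hg'1 : gs < g' by rewrite /g' lt_min lt2 andbT; lra.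
  have hg'2 : g' <= g2 by rewrite /g' ge_min lexx orbT.
  have hg'3 : g' <= gs + e / 2 by rewrite /g' ge_min lexx.
  have : S g'.
    split; first by apply/andP; split => //; lra.
    have : `|g' - gs| < e by rewrite gtr0_norm ?subr_gt0 //; lra.
    by move=> /near hn s xi; rewrite hn; exact: Ggs.
  move=> /(sup_upper_bound hsup); rewrite -/gs; lra.
by move=> <-.
Qed.


Lemma rkU g P : DichP N mu (Ps g) P -> mrank (U g) = \rank (P 0)^T.
Proof.
case/(dich_fibers Acont hPhi hmu hN) => hPi _ hU _.
apply: setdim_rs => xi; rewrite /fiber /=.
by rewrite hU; exact: fix_rs.
Qed.

Lemma rkV g P : DichP N mu (Ps g) P -> mrank (V g) = (n - \rank (P 0%R)^T)%N.
Proof.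
case/(dich_fibers Acont hPhi hmu hN) => hPi _ _ hV.
rewrite -mxrank_ker; apply: setdim_rs => xi; rewrite /fiber /=.
by rewrite hV; exact: ker_rs.
Qed.

Lemma claimC g1 g2 P1 P2 : g1 <= g2 ->
  DichP N mu (Ps g1) P1 -> DichP N mu (Ps g2) P2 ->
  (\rank (P2 0%R)^T <= \rank (P1 0%R)^T)%N ->
  forall g, g1 <= g <= g2 -> rhoND N mu A g.
Proof.
move=> g12 hD1 hD2 hr g hg.
have [hPi1 _ hU1 hV1] := dich_fibers Acont hPhi hmu hN hD1.
have [hPi2 _ hU2 hV2] := dich_fibers Acont hPhi hmu hN hD2.
have sub12 : ((P1 0)^T <= (P2 0)^T)%MS.
  apply/row_subP => j; rewrite -tr_col; apply/(fix_rs (hPi2 0) _).1.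
  apply/hU2; apply: (monoU hmu hN g12); apply/hU1.
  by apply/(fix_rs (hPi1 0) _).2; rewrite tr_col row_sub.
have sub21 : ((P2 0)^T <= (P1 0)^T)%MS.
  have := mxrank_leqif_sup sub12 => /leqifP.
  case: ifP => // _ h; move: hr; rewrite leqNgt h //.
have e0 : P1 0 = P2 0.
  apply: mx_eq_cols => xi.
  have ha : P1 0 *m (P2 0 *m xi) = P2 0 *m xi.
    apply/(fix_rs (hPi1 0) _).2; apply: submx_trans sub21.
    by apply/(fix_rs (hPi2 0) _).1; rewrite mulmxA hPi2.
  have hb : P1 0 *m (xi - P2 0 *m xi) = 0.
    apply/hV1; apply: (monoV hmu hN g12); apply/hV2.
    by rewrite mulmxBr mulmxA hPi2 subrr.
  by move: hb; rewrite mulmxBr ha => /eqP; rewrite subr_eq0 => /eqP.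
have eP : P1 = P2.
  apply/funext => s.
  by rewrite (Pconj Acont hPhi hmu hN hD1) (Pconj Acont hPhi hmu hN hD2) e0.
rewrite -eP in hD2.
exact: (DichP_rho hPhi hmu (bridge hmu hN hD1 hD2 hg)).
Qed.

Lemma main_sec (g1 g2 : R) :
  rhoND N mu A g1 -> rhoND N mu A g2 -> g1 < g2 ->
  [/\ (U g2 `&` V g1 <> [set p : R * 'cV[R]_n | p.2 = 0])
        <-> (exists2 gamma, g1 <= gamma <= g2 & SigmaND N mu A gamma),
      (exists2 gamma, g1 <= gamma <= g2 & SigmaND N mu A gamma)
        <-> (mrank (U g1) < mrank (U g2))%N &
      (mrank (U g1) < mrank (U g2))%N
        <-> (mrank (V g2) < mrank (V g1))%N].
Proof.
move=> rho1 rho2 g12.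
have g12' := ltW g12.
have [P1 hD1] := rho_DichP Acont hPhi hmu rho1.
have [P2 hD2] := rho_DichP Acont hPhi hmu rho2.
have [hPi1 _ hU1 hV1] := dich_fibers Acont hPhi hmu hN hD1.
have [hPi2 _ hU2 hV2] := dich_fibers Acont hPhi hmu hN hD2.
have rU1 := rkU hD1; have rU2 := rkU hD2.
have rV1 := rkV hD1; have rV2 := rkV hD2.
have rn1 : (\rank (P1 0%R)^T <= n)%N by exact: rank_leq_col.
have rn2 : (\rank (P2 0%R)^T <= n)%N by exact: rank_leq_col.
have b_lt : (exists2 gamma, g1 <= gamma <= g2 & SigmaND N mu A gamma) ->
    (\rank (P1 0%R)^T < \rank (P2 0%R)^T)%N.
  case=> g hg hS; rewrite ltnNge; apply/negP => hr.
  exact: (claimC g12' hD1 hD2 hr hg hS).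
have nb_U : ~ (exists2 gamma, g1 <= gamma <= g2 & SigmaND N mu A gamma) ->
    forall s xi, U g2 (s, xi) <-> U g1 (s, xi).
  move=> nb; apply: noSpec_U => // g hg hS; apply: nb; by exists g.
split.
- split.
  + move=> ha; apply: boolp.contrapT => nb; apply: ha.
    apply/seteqP; split => -[s xi] /=.
      case=> /(nb_U nb) /hU1 h1 /hV1 h2.
      by rewrite -h1 h2.
    move=> ->; split; first by apply/hU2; rewrite mulmx0.
    by apply/hV1; rewrite mulmx0.
  + move=> /b_lt hlt he.
    have := @inter_nonzero R n _ _ (P2 0)^T (kermx (P1 0)^T).
    rewrite mxrank_ker; case; first by lia.
    move=> xi [xi0 [h1 h2]].
    have : (U g2 `&` V g1) (0, xi).
      split; first by apply/hU2; exact/(fix_rs (hPi2 0) _).2.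
      by apply/hV1; exact/ker_rs.
    by rewrite he /= => /eqP; rewrite (negbTE xi0).
- split; first by move=> /b_lt; rewrite rU1 rU2.
  move=> hc; apply: boolp.contrapT => nb; move: hc.
  have -> : mrank (U g2) = mrank (U g1).
    rewrite /mrank; congr setdim; apply/seteqP; split => xi /=; rewrite /fiber /=.
      by move=> /(nb_U nb).
    by move=> /(nb_U nb).
  by rewrite ltnn.
- by rewrite rU1 rU2 rV1 rV2; lia.
Qed.

End F.


Theorem mainTheorem6 (R : realType) (n : nat) (N : 'cV[R]_n -> R)
    (A : R -> 'M[R]_n) (Phi : R -> R -> 'M[R]_n) (mu : R -> R)
    (gamma1 gamma2 : R) :
  (0 < n)%N ->
  is_norm N ->
  continuous A ->
  is_evol_op A Phi ->
  differentiable_growth_rate mu ->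
  rhoND N mu A gamma1 ->
  rhoND N mu A gamma2 ->
  gamma1 < gamma2 ->
  [/\ (Uman N mu Phi gamma2 `&` Vman N mu Phi gamma1
         <> [set p : R * 'cV[R]_n | p.2 = 0])
        <-> (exists2 gamma, gamma1 <= gamma <= gamma2 & SigmaND N mu A gamma),
      (exists2 gamma, gamma1 <= gamma <= gamma2 & SigmaND N mu A gamma)
        <-> (mrank (Uman N mu Phi gamma1) < mrank (Uman N mu Phi gamma2))%N &
      (mrank (Uman N mu Phi gamma1) < mrank (Uman N mu Phi gamma2))%N
        <-> (mrank (Vman N mu Phi gamma2) < mrank (Vman N mu Phi gamma1))%N].
Proof.
move=> _ hN Acont hPhi hmu rho1 rho2 lt12.
exact: (main_sec Acont hPhi hmu hN rho1 rho2 lt12).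
Qed.
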